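(* Let $\Omega\subset\mathbb{C}^2$ be a simply connected domain and let $\{t_n\}_{n\in\mathbb{Z}}$ be nowhere vanishing holomorphic functions on $\Omega$ satisfying $\partial_x\partial_y\log t_n=t_{n+1}t_{n-1}/t_n^2$ for all $n$. Put $s_{n+1}=\partial_y\log(t_n/t_{n+1})$, $r_n=\partial_x\partial_y\log t_n$, $M_n=\partial_x\partial_y+s_{n+1}\partial_x+r_n$, $H_n=\partial_y+s_{n+1}$, $B_n=-r_n^{-1}\partial_x$. Suppose $\{u_n\}_{n\in\mathbb{Z}}$ are holomorphic functions on $\Omega$ with $M_nu_n=0$, $u_{n+1}=H_nu_n$ and $u_{n-1}=B_nu_n$ for all $n\in\mathbb{Z}$. Then $\tau_n=t_nu_n$ satisfies $\partial_x\partial_y\log\tau_n=\tau_{n+1}\tau_{n-1}/\tau_n^2$ for all $n\in\mathbb{Z}$, on any open subset where all $u_n$ are nowhere zero.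
   Context: Note $r_n=t_{n+1}t_{n-1}/t_n^2$ is nowhere zero, so $B_n$ is well defined. *)

(* Defs.v *)
(* The complex numbers are modelled as R[i] (mathcomp-real-closed `complex`)
   over an arbitrary realType R, taken through the regular-algebra alias ^o
   so that it is a normed module over itself; C^2 is the product
   (R[i]^o * R[i]^o), a normed module over the scalar field R[i].
   Derivatives ('D_v, differentiable) are therefore complex derivatives. *)
From HB Require Import structures.
From mathcomp Require Import all_boot all_order all_algebra.
From mathcomp Require Import complex.
From mathcomp Require Import all_classical all_reals all_analysis.
Import Order.TTheory GRing.Theory Num.Theory.
Import numFieldNormedType.Exports.

Set Implicit Arguments.
Unset Strict Implicit.
Unset Printing Implicit Defensive.

Local Open Scope ring_scope.
Local Open Scope classical_set_scope.

Notation Cplx R := ((R[i])^o).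
Notation C2 R := ((R[i])^o * (R[i])^o)%type.

Definition dx (R : realType) (f : C2 R -> Cplx R) (z : C2 R) : Cplx R :=
  'D_((1 : Cplx R), (0 : Cplx R)) f z.
Definition dy (R : realType) (f : C2 R -> Cplx R) (z : C2 R) : Cplx R :=
  'D_((0 : Cplx R), (1 : Cplx R)) f z.

(* d/dy log f = (d/dy f) / f  (logarithmic derivative; independent of the
   branch of the logarithm) *)
Definition dylog (R : realType) (f : C2 R -> Cplx R) (z : C2 R) : Cplx R :=
  dy f z / f z.

Definition holomorphic_on (R : realType) (O : set (C2 R)) (f : C2 R -> Cplx R) :=
  forall z, O z -> differentiable f z.

Definition simply_connected (R : realType) (O : set (C2 R)) :=
  forall g : R -> C2 R,
    {within `[0, 1]%classic, continuous g} ->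
    g 0 = g 1 ->
    g @` `[0, 1]%classic `<=` O ->
    exists H : (R * R)%type -> C2 R,
      [/\ {within (`[0, 1]%classic `*` `[0, 1]%classic), continuous H},
          H @` (`[0, 1]%classic `*` `[0, 1]%classic) `<=` O,
          (forall s, `[0, 1]%classic s -> H (s, 0) = g s /\ H (s, 1) = H (0, 1)) &
          (forall v, `[0, 1]%classic v -> H (0, v) = H (1, v))].

Definition domain (R : realType) (O : set (C2 R)) :=
  [/\ O !=set0, open O & connected O].

(* Main.v *)
Require Import Defs.
From HB Require Import structures.
From mathcomp Require Import all_boot all_order all_algebra.
From mathcomp Require Import complex.
From mathcomp Require Import all_classical all_reals all_analysis.
From mathcomp Require Import ring lra.
Import Order.TTheory GRing.Theory Num.Theory.
Import numFieldNormedType.Exports.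
Local Open Scope ring_scope.
Local Open Scope classical_set_scope.


Lemma alg_mul (F : fieldType) (a b da db : F) : a != 0 -> b != 0 ->
  (a * db + b * da) / (a * b) = da / a + db / b.
Proof. move=> a0 b0; field. by rewrite a0 b0. Qed.

Lemma alg_div (F : fieldType) (a b da db : F) : a != 0 -> b != 0 ->
  (a * (- (b ^+ 2)^-1 * db) + b^-1 * da) / (a / b) = da / a - db / b.
Proof. move=> a0 b0; field. by rewrite a0 b0. Qed.

Lemma alg_step1 (F : fieldType) (A B d u0 : F) : u0 != 0 ->
  A + d / u0 = (d + (A - B) * u0) / u0 + B.
Proof. move=> h; field. exact: h. Qed.

Lemma alg_solve (F : fieldType) (r x y : F) : r != 0 -> y = - r^-1 * x ->
  x = - r * y.
Proof. move=> h ->; field. exact: h. Qed.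

Lemma alg_final (F : fieldType) (u1 u0 um t1 t0 tm r1 : F) :
  u0 != 0 -> t0 != 0 ->
  u1 * (- (u0 ^+ 2)^-1 * (- (t1 * tm / t0 ^+ 2) * um)) + u0^-1 * (- r1 * u0) + r1
  = (t1 * u1) * (tm * um) / (t0 * u0) ^+ 2.
Proof. move=> h1 h2; field. by rewrite h1 h2. Qed.

Section S.
Variable R : realType.
Implicit Types f g : C2 R -> Cplx R.

Lemma sc (a b : R[i]) : a *: (b : Cplx R) = a * b.
Proof. by []. Qed.

Lemma dx_derivable f z : dx f z != 0 -> derivable f z ((1 : Cplx R), (0 : Cplx R)).
Proof. move=> h; apply: cvgNpoint; exact: h. Qed.

Lemma dylog_mul f g w : derivable f w ((0 : Cplx R), (1 : Cplx R)) ->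
  derivable g w ((0 : Cplx R), (1 : Cplx R)) -> f w != 0 -> g w != 0 ->
  dylog (fun y => f y * g y) w = dylog f w + dylog g w.
Proof.
move=> df dg f0 g0; rewrite /dylog /dy.
have -> : (fun y => f y * g y) = f * g by [].
rewrite deriveM; [ | exact: df | exact: dg].
rewrite !sc. apply: alg_mul; [exact: f0 | exact: g0].
Qed.

Lemma dylog_div f g w : derivable f w ((0 : Cplx R), (1 : Cplx R)) ->
  derivable g w ((0 : Cplx R), (1 : Cplx R)) -> f w != 0 -> g w != 0 ->
  dylog (fun y => f y / g y) w = dylog f w - dylog g w.
Proof.
move=> df dg f0 g0; rewrite /dylog /dy.
have -> : (fun y => f y / g y) = f * (fun y => (g y)^-1) by [].
rewrite deriveM; [ | exact: df | exact: derivableV].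
rewrite deriveV; [ | exact: g0 | exact: dg].
rewrite !sc. apply: alg_div; [exact: f0 | exact: g0].
Qed.
End S.

Theorem mainTheorem14 (R : realType) (O : set (C2 R))
  (t u : int -> C2 R -> Cplx R) :
  domain O -> simply_connected O ->
  (forall n, holomorphic_on O (t n)) ->
  (forall n z, O z -> t n z != 0) ->
  (* Toda equation for t *)
  (forall n z, O z ->
     dx (dylog (t n)) z = t (n + 1) z * t (n - 1) z / t n z ^+ 2) ->
  (* s_{n+1} = d_y log (t_n / t_{n+1}),  r_n = d_x d_y log t_n *)
  let s := fun n : int => dylog (fun w => t n w / t (n + 1) w) in
  let r := fun n : int => dx (dylog (t n)) in
  (forall n, holomorphic_on O (u n)) ->
  (* M_n u_n = 0 *)
  (forall n z, O z ->
     dx (dy (u n)) z + s n z * dx (u n) z + r n z * u n z = 0) ->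
  (* u_{n+1} = H_n u_n *)
  (forall n z, O z -> u (n + 1) z = dy (u n) z + s n z * u n z) ->
  (* u_{n-1} = B_n u_n *)
  (forall n z, O z -> u (n - 1) z = - (r n z)^-1 * dx (u n) z) ->
  forall U : set (C2 R), open U -> U `<=` O ->
  (forall n z, U z -> u n z != 0) ->
  let tau := fun (n : int) (w : C2 R) => t n w * u n w in
  forall n z, U z ->
    dx (dylog (tau n)) z = tau (n + 1) z * tau (n - 1) z / tau n z ^+ 2.
Proof.
move=> _ _ ht ht0 toda s r hu _ hH hB U oU UO hu0 tau n z Uz.
have dt : forall k w v, O w -> derivable (t k) w v.
  by move=> k w v Ow; apply: diff_derivable; exact: ht.
have du : forall k w v, O w -> derivable (u k) w v.
  by move=> k w v Ow; apply: diff_derivable; exact: hu.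
have r0 : forall k w, O w -> r k w != 0.
  move=> k w Ow; rewrite /r toda //.
  by rewrite mulf_neq0 ?invr_eq0 ?expf_neq0 ?mulf_neq0 ?ht0.
have Oz := UO z Uz.
pose F := u (n + 1) * (fun y => (u n y)^-1) + dylog (t (n + 1)).
have near : \forall w \near z, dylog (tau n) w = F w.
  apply: (filterS _ (oU z Uz)) => w Uw.
  have Ow := UO w Uw.
  have -> : F w = u (n + 1) w / u n w + dylog (t (n + 1)) w by [].
  rewrite /tau (@dylog_mul R _ _ _ (dt _ _ _ Ow) (du _ _ _ Ow) (ht0 _ _ Ow) (hu0 _ _ Uw)).
  have := hH n w Ow.
  rewrite /s (@dylog_div R _ _ _ (dt _ _ _ Ow) (dt _ _ _ Ow) (ht0 _ _ Ow) (ht0 _ _ Ow)) => ->.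
  apply: alg_step1; exact: hu0.
rewrite /dx (near_eq_derive _ near) /F.
rewrite deriveD; last first.
- apply: dx_derivable; rewrite -/(r (n + 1) z); exact: r0.
- apply: derivableM; first exact: du.
  apply: derivableV; [exact: hu0 | exact: du].
rewrite deriveM; [ | exact: du | apply: derivableV; [exact: hu0 | exact: du]].
rewrite deriveV; [ | exact: hu0 | exact: du].
have Dx0 : 'D_((1 : Cplx R), (0 : Cplx R)) (u n) z = - r n z * u (n - 1) z.
  apply: alg_solve; [exact: r0 | exact: hB].
have Dx1 : 'D_((1 : Cplx R), (0 : Cplx R)) (u (n + 1)) z = - r (n + 1) z * u n z.
  apply: alg_solve; first exact: r0.
  by have := hB (n + 1) z Oz; rewrite addrK.
rewrite Dx0 Dx1 -/(r (n + 1) z) /tau !sc.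
rewrite [r n z]toda //.
apply: alg_final; [exact: hu0 | exact: ht0].
Qed.
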